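(* Let $n\ge1$, let $\Omega$ be an open subset of $\mathbb{R}^n$, and let $p\in[1,\infty)$ and $T>0$ be constants. Suppose $u\in L^p(\Omega\times(0,T))$ and $u(x,t)=\int_{\mathbb{R}^n}\Phi(x-y,t)\,d\mu(y)$ for some finite positive Borel measure $\mu$ on $\mathbb{R}^n$. Then for each compact subset $K$ of $\Omega$, $$\max_{x\in K}u(x,t)=o\big(t^{-\frac{n+2}{2p}}\big)\quad\text{as }t\to0^+.$$
   Context: $\Phi$ is the heat kernel: $\Phi(x,t)=(4\pi t)^{-n/2}e^{-|x|^2/(4t)}$ for $t>0$ and $\Phi(x,t)=0$ for $t\le0$. *)

(* Defs.v *)
From HB Require Import structures.
From mathcomp Require Import all_boot all_order all_algebra.
From mathcomp Require Import all_classical all_reals all_analysis.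
Set Implicit Arguments. Unset Strict Implicit. Unset Printing Implicit Defensive.
Import Order.TTheory GRing.Theory Num.Theory.
Import numFieldNormedType.Exports.
Local Open Scope classical_set_scope.
Local Open Scope ring_scope.

(* Points of R^n are row vectors 'rV[R]_n (product = Euclidean topology). *)

Definition sqnorm (R : realType) (n : nat) (x : 'rV[R]_n) : R :=
  \sum_(i < n) (x ord0 i) ^+ 2.

Definition heat_kernel (R : realType) (n : nat) (x : 'rV[R]_n) (t : R) : R :=
  if 0 < t then (4 * pi * t) `^ (- (n%:R / 2)) * expR (- sqnorm x / (4 * t))
  else 0.

Definition borelRn (R : realType) (n : nat) := g_sigma_algebraType (@open 'rV[R]_n).

(* Lebesgue integral over R^n of a nonnegative function, as the iterated
   integral dx_1 ... dx_n w.r.t. 1-dimensional Lebesgue measure (this equals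
   the integral w.r.t. n-dimensional Lebesgue measure by Tonelli). *)
Fixpoint lebesgue_iint (R : realType) (n : nat) : ('rV[R]_n -> \bar R) -> \bar R :=
  match n with
  | 0%N => fun f => f 0
  | m.+1 => fun f =>
      (\int[@lebesgue_measure R]_(a in [set: R])
          lebesgue_iint (fun v : 'rV[R]_m =>
            f (\row_(i < m.+1) (if unlift ord0 i is Some j then v ord0 j else (a : R)))))%E
  end.

(* Main.v *)
Require Import Defs.
From HB Require Import structures.
From mathcomp Require Import all_boot all_order all_algebra.
From mathcomp Require Import all_classical all_reals all_analysis.
From mathcomp Require Import ring lra.
Import Order.TTheory GRing.Theory Num.Theory.
Import numFieldNormedType.Exports.
Local Open Scope classical_set_scope.
Local Open Scope ring_scope.
Section IntLemmas.
Local Open Scope ereal_scope.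
Context d (T : measurableType d) (R : realType).
Variable mu : {measure set T -> \bar R}.
Import HBNNSimple.

Lemma int_mono_ge0 (D : set T) (f g : T -> \bar R) :
  (forall x, D x -> 0 <= f x) -> (forall x, D x -> f x <= g x) ->
  \int[mu]_(x in D) f x <= \int[mu]_(x in D) g x.
Proof.
move=> f0 fg.
have g0 : forall x, D x -> 0 <= g x by move=> x Dx; exact: le_trans (f0 _ Dx) (fg _ Dx).
rewrite (ge0_integralE _ f0) (ge0_integralE _ g0).
apply: ereal_sup_le => _ [h /= hf <-]; exists h => //= x.
apply: le_trans (hf x) _; rewrite /patch; case: ifP => // /set_mem Dx; exact: fg.
Qed.
Lemma int_superadd (A B : set T) (f : T -> \bar R) :
  (forall x, 0 <= f x) -> A `&` B = set0 ->
  \int[mu]_(x in A) f x + \int[mu]_(x in B) f x <= \int[mu]_(x in A `|` B) f x.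
Proof.
move=> f0 AB0.
have f0' (D : set T) : forall x, D x -> 0 <= f x by move=> x _; exact: f0.
have Z0 : 0 <= \int[mu]_(x in A `|` B) f x by apply: integral_ge0.
have IA0 : 0 <= \int[mu]_(x in A) f x by apply: integral_ge0.
have IB0 : 0 <= \int[mu]_(x in B) f x by apply: integral_ge0.
set Z := \int[mu]_(x in A `|` B) f x.
have [Zy|Zfin] := eqVneq Z +oo; first by rewrite Zy leey.
have Zf : Z \is a fin_num by rewrite ge0_fin_numE // ltey.
have key (h1 h2 : {nnsfun T >-> R}) :
   (forall x, (h1 x)%:E <= (f \_ A) x) -> (forall x, (h2 x)%:E <= (f \_ B) x) ->
   sintegral mu h1 + sintegral mu h2 <= Z.
  move=> H1 H2; rewrite -sintegralD /Z (ge0_integralE _ (f0' _)).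
  apply: ereal_sup_ubound; exists (add_nnsfun h1 h2) => //= x.
  have := H1 x; have := H2 x; rewrite !patchE.
  have h10 : (0 <= h1 x)%R by [].
  have h20 : (0 <= h2 x)%R by [].
  have [xA|xA] := pselect (A x); have [xB|xB] := pselect (B x).
  - by have : (A `&` B) x by []; rewrite AB0.
  - rewrite (mem_set xA) memNset // (mem_set (or_introl xA : (A `|` B) x)).
    move=> h2z h1f.
    have -> : h2 x = 0%R by apply/eqP; rewrite eq_le h20 andbT -lee_fin.
    by rewrite addr0.
  - rewrite (mem_set xB) memNset // (mem_set (or_intror xB : (A `|` B) x)).
    move=> h2f h1z.
    have -> : h1 x = 0%R by apply/eqP; rewrite eq_le h10 andbT -lee_fin.
    by rewrite add0r.
  - rewrite !memNset //; last by case.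
    move=> h2z h1z; have P0 : (point : \bar R) = 0 by []. rewrite P0 in h1z h2z *; rewrite EFinD -[0]adde0; exact: leeD h1z h2z.
have p0 (D : set T) x : ((@nnsfun0 _ T R) x)%:E <= (f \_ D) x.
  by rewrite patchE; case: ifP => _ //; exact: f0.
have hB (h2 : {nnsfun T >-> R}) : (forall x, (h2 x)%:E <= (f \_ B) x) ->
    \int[mu]_(x in A) f x + sintegral mu h2 <= Z.
  move=> H2.
  have b0 := sintegral_ge0 mu h2.
  have bZ : sintegral mu h2 <= Z.
    by have := key _ _ (p0 A) H2; rewrite sintegral0 add0e.
  have bf : sintegral mu h2 \is a fin_num.
    by rewrite ge0_fin_numE // (le_lt_trans bZ) // ltey.
  rewrite -leeBrDr // (ge0_integralE _ (f0' A)).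
  apply: ge_ereal_sup => _ [h1 H1 <-]; rewrite leeBrDr //; exact: key.
have IAZ : \int[mu]_(x in A) f x <= Z.
  by have := hB _ (p0 B); rewrite sintegral0 adde0.
have IAf : \int[mu]_(x in A) f x \is a fin_num.
  by rewrite ge0_fin_numE // (le_lt_trans IAZ) // ltey.
rewrite addeC -leeBrDr // (ge0_integralE _ (f0' B)).
apply: ge_ereal_sup => _ [h2 H2 <-]; rewrite leeBrDr // addeC; exact: hB.
Qed.
End IntLemmas.
Section Iint.
Variable R : realType.
Local Open Scope ereal_scope.

Lemma iint_ge0 n (f : 'rV[R]_n -> \bar R) : (forall v, 0 <= f v) -> 0 <= lebesgue_iint f.
Proof.
elim: n f => [|m IH] f f0 /=; first exact: f0.
apply: integral_ge0 => a _; apply: IH => v; exact: f0.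
Qed.

Lemma iint_mono n (f g : 'rV[R]_n -> \bar R) : (forall v, 0 <= f v) ->
  (forall v, f v <= g v) -> lebesgue_iint f <= lebesgue_iint g.
Proof.
elim: n f g => [|m IH] f g f0 fg /=; first exact: fg.
apply: int_mono_ge0 => a _; first by apply: iint_ge0 => v; exact: f0.
by apply: IH => v; [exact: f0|exact: fg].
Qed.
End Iint.

Section Box.
Variable R : realType.
Local Open Scope ring_scope.
Lemma forall_split m (P : 'I_m.+1 -> Prop) : (forall i, P i) <-> P ord0 /\ (forall j, P (lift ord0 j)).
Proof.
split; first by move=> H; split => //.
by move=> [H0 H1] i; case: (unliftP ord0 i) => [j ->|->].
Qed.

Lemma iint_box n (x : 'rV[R]_n) (rho c : R) : 0 <= c -> 0 < rho ->
  lebesgue_iint (fun v : 'rV[R]_n =>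
     (c * (`[< forall i, `|x ord0 i - v ord0 i| < rho >])%:R)%:E) = (c * (2 * rho) ^+ n)%:E.
Proof.
move=> + rho0; elim: n x c => [|m IH] x c c0 /=.
  by rewrite asboolT ?mulr1 ?expr0 // => -[].
pose x' := \row_(j < m) x ord0 (lift ord0 j).
transitivity (\int[@lebesgue_measure R]_(a in [set: R])
   ((c * (2 * rho) ^+ m) * \1_(`]x ord0 ord0 - rho, x ord0 ord0 + rho[%classic : set R) a)%:E)%E.
  apply: eq_integral => a _.
  transitivity (lebesgue_iint (fun v : 'rV[R]_m => ((c * ((x ord0 ord0 - rho < a < x ord0 ord0 + rho)%R)%:R) *
      (`[< forall j, `|x' ord0 j - (v ord0 j)| < rho >])%:R)%:E)).
    congr lebesgue_iint; apply: funext => v; congr EFin; rewrite -mulrA; congr (c * _).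
    set r := \row_i _.
    have r0 : r ord0 ord0 = a by rewrite mxE unlift_none.
    have r1 j : r ord0 (lift ord0 j) = v ord0 j by rewrite mxE liftK.
    case: asboolP => H.
      have [H0 H1] := (forall_split _ (fun i => `|x ord0 i - r ord0 i| < rho)).1 H.
      rewrite r0 ltr_distlC in H0; rewrite H0 asboolT ?mulr1 // => j.
      by rewrite mxE -r1; exact: H1.
    case: (boolP (_ < a < _)) => Ha; last by rewrite mul0r.
    rewrite mul1r asboolF //; apply: contra_not H => H.
    apply/(forall_split _ (fun i => `|x ord0 i - r ord0 i| < rho)); split; first by rewrite /= r0 ltr_distlC.
    by move=> j; rewrite r1; have := H j; rewrite mxE.
  rewrite IH; last by rewrite mulr_ge0.
  rewrite indicE mulrAC; congr ((_ * _)%:E); congr (_%:R).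
  congr nat_of_bool; apply/idP/idP => H; [apply/mem_set | move/set_mem: H]; by rewrite /= in_itv.
rewrite (@integralZl_indic _ _ _ (@lebesgue_measure R) setT measurableT (fun=> `]x ord0 ord0 - rho, x ord0 ord0 + rho[%classic) (c * (2 * rho) ^+ m)); first last.
  by [].
  by move=> H; exfalso; move: H; apply/negP; rewrite -leNgt mulr_ge0 // exprn_ge0 // mulr_ge0 // ltW.
rewrite integral_indic //= setIT lebesgue_measure_itv /= ifT; last by rewrite lte_fin ltrBlDr -addrA ltrDl addr_gt0.
rewrite -EFinD -EFinM exprSr mulrA; congr (_ * _)%:E.
by ring.
Qed.
End Box.
Section Topo.
Variable R : realType.
Variable n : nat.
Lemma ball_rV (x z : 'rV[R]_n) r : ball x r z <-> (0 < r /\ forall i, `|x ord0 i - z ord0 i| < r).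
Proof.
rewrite /ball /= /mx_ball; split => -[r0 H]; split => //.
  by move=> i; have := H ord0 i; rewrite /ball /=.
move=> i j; rewrite (ord1 i); have := H j; by rewrite /ball /=.
Qed.
Lemma unif_radius (K Omega : set 'rV[R]_n) : compact K -> open Omega -> K `<=` Omega ->
  exists2 r : R, 0 < r & forall x, K x -> forall z, ball x r z -> Omega z.
Proof.
move=> /compact_near_coveringP cK oO KO.
have : \forall r \near (0:R)^'+, K `<=` (fun x => forall z, ball x r z -> Omega z).
  apply: cK => x Kx.
  have : nbhs x Omega by apply: open_nbhs_nbhs; split => //; exact: KO.
  move=> /nbhs_ballP [e /= e0 He].
  exists (ball x (e/2), [set r | 0 < r < e/2]) => /=.
    split; first by apply: nbhsx_ballx; rewrite divr_gt0.
    exists (e/2); first by rewrite /= divr_gt0.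
    move=> r /= Hr r0; rewrite r0 /=.
    move: Hr; rewrite /ball /= sub0r normrN gtr0_norm //.
  move=> [x' r] /= [xx' /andP [r0 re]] z x'z.
  apply: He; rewrite [e](splitr e); apply: (ball_triangle xx').
  by apply: le_ball x'z; rewrite ltW.
move=> /nbhs_ballP [e /= e0 He].
exists (e/2); first by rewrite divr_gt0.
apply: He; last by rewrite divr_gt0.
rewrite /ball /= sub0r normrN gtr0_norm ?divr_gt0 //.
by rewrite ltr_pdivrMr // ltr_pMr // ltr1n.
Qed.
End Topo.

Section HK.
Variable R : realType.
Variable n : nat.
Local Open Scope ring_scope.

Definition c0 : R := (3:R) `^ (- (n%:R / 2)) * expR (- (1/4)).

Lemma c0_gt0 : 0 < c0.
Proof. by rewrite mulr_gt0 ?powR_gt0 ?expR_gt0. Qed.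

Lemma sqnorm_ge0 (w : 'rV[R]_n) : 0 <= sqnorm w.
Proof. by apply: sumr_ge0 => i _; exact: sqr_ge0. Qed.

Lemma sqnorm_tri (w v : 'rV[R]_n) : sqnorm v <= 2 * sqnorm w + 2 * sqnorm (v - w).
Proof.
rewrite /sqnorm !mulr_sumr -big_split /=; apply: ler_sum => i _.
rewrite !mxE; set a := w ord0 i; set b := v ord0 i.
have := sqr_ge0 (2 * a - b); nra.
Qed.

Lemma hk_compare (w v : 'rV[R]_n) t s : 0 < t -> 2 * t <= s <= 3 * t ->
  sqnorm (v - w) <= t -> c0 * heat_kernel w t <= heat_kernel v s.
Proof.
move=> t0 /andP[s2 s3] vw.
have s0 : 0 < s by nra.
rewrite /heat_kernel t0 s0 /c0.
set b := n%:R / 2.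
have pi0 : 0 < pi :> R by exact: pi_gt0.
rewrite mulrACA; apply: ler_pM.
- by rewrite mulr_ge0 ?powR_ge0.
- by rewrite mulr_ge0 ?expR_ge0.
- rewrite -powRM ?mulr_ge0 //; try nra.
  rewrite !powRN lef_pV2 ?posrE ?powR_gt0 //; try nra.
  by apply: ge0_ler_powR; rewrite ?nnegrE; try nra; rewrite divr_ge0 // ler0n.
- rewrite -expRD ler_expR.
  have W0 := sqnorm_ge0 w; have V0 := sqnorm_ge0 v.
  have tri := sqnorm_tri w v.
  set W := sqnorm w in W0 tri *; set V := sqnorm v in V0 tri *.
  rewrite !mulNr -opprD lerN2.
  have -> : 1/4 + W / (4 * t) = (t + W) / (4 * t) by field; apply/eqP; nra.
  rewrite ler_pdivrMr ?mulr_gt0 // mulrAC ler_pdivlMr ?mulr_gt0 //.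
  nra.
Qed.
End HK.
Section Scale.
Local Open Scope ereal_scope.
Context d (T : measurableType d) (R : realType).
Variable mu : {measure set T -> \bar R}.
Import HBNNSimple.

Lemma int_scale_ge (D : set T) (f : T -> \bar R) (k : R) : (0 <= k)%R -> (forall x, 0 <= f x) ->
  k%:E * \int[mu]_(x in D) f x <= \int[mu]_(x in D) (k%:E * f x).
Proof.
move=> k0 f0.
have kf0 : forall x, D x -> 0 <= k%:E * f x by move=> x _; rewrite mule_ge0.
have f0' : forall x, D x -> 0 <= f x by move=> x _.
rewrite (ge0_integralE _ f0') (ge0_integralE _ kf0).
rewrite -ereal_supZl //; last first.
  apply/set0P; exists (sintegral mu (@nnsfun0 _ T R)); exists nnsfun0 => //= x.
  by rewrite patchE; case: ifP.
apply: ereal_sup_le => _ [_ [h hf <-] <-].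
exists (scale_nnsfun h k0); last by rewrite sintegralrM.
move=> x /=; have := hf x; rewrite !patchE; case: ifP => _.
  by move=> H; rewrite EFinM; exact: lee_wpmul2l.
move=> H; rewrite EFinM; have P0 : (point : \bar R) = 0 by [].
by rewrite P0 in H *; rewrite mule_ge0_le0.
Qed.
End Scale.
Section Heat.
Variable R : realType.
Variable n : nat.
Variable mu : {finite_measure set (borelRn R n) -> \bar R}.
Local Open Scope ring_scope.

Lemma hk_ge0 (x : 'rV[R]_n) t : 0 <= heat_kernel x t.
Proof. by rewrite /heat_kernel; case: ifP => // _; rewrite mulr_ge0 ?powR_ge0 ?expR_ge0. Qed.

Lemma hk_le (x : 'rV[R]_n) t : 0 < t -> heat_kernel x t <= (4 * pi * t) `^ (- (n%:R / 2)).
Proof.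
move=> t0; rewrite /heat_kernel t0 ler_piMr ?powR_ge0 // expR_le1.
rewrite mulNr oppr_le0 divr_ge0 ?sqnorm_ge0 //.
by rewrite mulr_ge0 // ?ltW // mulr_ge0 // ltW // pi_gt0.
Qed.

Definition HI (x : 'rV[R]_n) t := (\int[mu]_(y in setT) (heat_kernel (x - y) t)%:E)%E.

Lemma HI_ge0 x t : (0 <= HI x t)%E.
Proof. by apply: integral_ge0 => y _; rewrite lee_fin hk_ge0. Qed.

Lemma HI_fin x t : 0 < t -> HI x t \is a fin_num.
Proof.
move=> t0; rewrite ge0_fin_numE ?HI_ge0 //.
apply: (@le_lt_trans _ _ (\int[mu]_(y in setT) (cst ((4 * pi * t) `^ (- (n%:R / 2)))%:E y))%E).
  by apply: int_mono_ge0 => y _; rewrite lee_fin ?hk_ge0 ?hk_le.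
rewrite integral_cst //= -(fineK (fin_num_measure mu setT measurableT)) -EFinM ltry //.
Qed.

Lemma HI_compare (x z : 'rV[R]_n) t s : 0 < t -> 2 * t <= s <= 3 * t ->
  sqnorm (z - x) <= t -> c0 R n * fine (HI x t) <= fine (HI z s).
Proof.
move=> t0 /andP[s2 s3] zx.
have s0 : 0 < s by apply: lt_le_trans s2; rewrite mulr_gt0.
have c00 := c0_gt0 R n.
rewrite -[c0 R n]/(fine (c0 R n)%:E) -fineM // ?HI_fin //; apply: fine_le; first by rewrite fin_numM // HI_fin.
  exact: HI_fin.
rewrite /HI.
have H1 := @int_scale_ge _ _ _ mu setT (fun y => (heat_kernel (x - y) t)%:E) (c0 R n) (ltW c00).
apply: le_trans (H1 _) _; first by move=> y; rewrite lee_fin hk_ge0.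
apply: int_mono_ge0 => y _.
  by rewrite -EFinM lee_fin mulr_ge0 ?hk_ge0 // ltW.
rewrite -EFinM lee_fin; apply: hk_compare => //; first by rewrite s2 s3.
by rewrite opprB addrA subrK.
Qed.
End Heat.
Section Time.
Variable R : realType.
Local Open Scope ring_scope.

Lemma int_dom_mono (A B : set R) (F : R -> \bar R) : A `<=` B -> (forall s, (0 <= F s)%E) ->
  (\int[@lebesgue_measure R]_(s in A) F s <= \int[@lebesgue_measure R]_(s in B) F s)%E.
Proof.
move=> AB F0; rewrite [X in (X <= _)%E]integral_mkcond [X in (_ <= X)%E]integral_mkcond.
apply: int_mono_ge0 => s _; rewrite !patchE.
  by case: ifP.
case: ifP => sA; first by rewrite mem_set //; apply: AB; exact: set_mem.
by case: ifP.
Qed.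

Lemma time_small (F : R -> \bar R) (T : R) : 0 < T -> (forall s, (0 <= F s)%E) ->
  (\int[@lebesgue_measure R]_(s in `]0%R, T%R[) F s < +oo)%E ->
  forall eta, 0 < eta -> \forall t \near (0:R)^'+,
    (\int[@lebesgue_measure R]_(s in `[(2 * t)%R, (3 * t)%R[) F s <= eta%:E)%E.
Proof.
move=> T0 F0 FT eta eta0.
set H := fun r => (\int[@lebesgue_measure R]_(s in `]0%R, r%R[) F s)%E.
have H0 r : (0 <= H r)%E by apply: integral_ge0 => s _.
have Hmono r1 r2 : r1 <= r2 -> (H r1 <= H r2)%E.
  move=> r12; apply: int_dom_mono => // s /=; rewrite !in_itv /= => /andP[-> /= sr].
  exact: lt_le_trans r12.
have Hfin r : r <= T -> H r \is a fin_num.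
  move=> rT; rewrite ge0_fin_numE //; exact: le_lt_trans (Hmono _ _ rT) FT.
set E := [set fine (H r) | r in `]0, T]].
have E0 : E !=set0 by exists (fine (H T)); exists T => //=; rewrite in_itv /= T0 lexx.
have Elb : has_lbound E by exists 0 => _ [r _ <-]; rewrite fine_ge0.
have [_ [r1 r1in <-] h1lt] := inf_adherent eta0 (conj E0 Elb).
move: r1in; rewrite /= in_itv /= => /andP[r10 r1T].
near=> t.
have t0 : 0 < t by near: t; exact: nbhs_right_gt.
have tr1 : t < r1 / 3 by near: t; apply: nbhs_right_lt; rewrite divr_gt0.
have t2 : 2 * t < r1 by move: tr1; rewrite ltr_pdivlMr //; nra.
have t3 : 3 * t <= r1 by move: tr1; rewrite ltr_pdivlMr //; nra.
have sU : `]0, 2 * t[%classic `|` `[2 * t, 3 * t[%classic = `]0, 3 * t[%classic :> set R.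
  apply/seteqP; split => s /=; rewrite !in_itv /=.
    by case => /andP[h1 h2]; apply/andP; split; nra.
  move=> /andP[h1 h2]; have [hs|hs] := ltP s (2 * t); [left|right]; apply/andP; split => //.
have dj : `]0, 2 * t[%classic `&` `[2 * t, 3 * t[%classic = set0 :> set R.
  apply/seteqP; split => s //= []; rewrite !in_itv /= => /andP[_ h1] /andP[h2 _].
  by move: (lt_le_trans h1 h2); rewrite ltxx.
have := @int_superadd _ _ _ (@lebesgue_measure R) _ _ F F0 dj; rewrite sU -/(H (2 * t)) -/(H (3 * t)).
have f2 : H (2 * t) \is a fin_num by apply: Hfin; apply: le_trans r1T; exact: ltW.
have f3 : H (3 * t) \is a fin_num by apply: Hfin; exact: le_trans r1T.
move=> Hsum; have : (\int[@lebesgue_measure R]_(s in `[(2 * t)%R, (3 * t)%R[) F s <= H (3 * t)%R - H (2 * t)%R)%E.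
  by rewrite leeBrDl.
move/le_trans; apply.
rewrite -(fineK f2) -(fineK f3) -EFinB lee_fin.
have h3 : fine (H (3 * t)) <= fine (H r1).
  by apply: fine_le => //; [exact: Hfin | exact: Hmono].
have h2 : inf E <= fine (H (2 * t)).
  apply: ge_inf => //; exists (2 * t) => //=; rewrite in_itv /=.
  by rewrite mulr_gt0 //= (le_trans (ltW t2)).
lra.
Unshelve. all: by end_near.
Qed.
End Time.
Section Alg.
Variable R : realType.
Local Open Scope ring_scope.

Lemma pow_alg (n : nat) (t u e c p : R) : (0 < n)%N -> 0 < t -> 0 < c -> 0 < e -> 1 <= p -> 0 <= u ->
  (c * u) `^ p * (2 * (t `^ (2^-1) / n%:R)) ^+ n * t <= (c * e) `^ p * (2 / n%:R) ^+ n ->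
  u <= e * t `^ (- ((n%:R + 2) / (2 * p))).
Proof.
move=> n0 t0 c0 e0 p1 u0 H.
have p0 : 0 < p by apply: lt_le_trans p1.
have nR0 : 0 < n%:R :> R by rewrite ltr0n.
set a := (n%:R + 2) / (2 * p).
rewrite leNgt; apply/negP => hu.
have ta0 : 0 < t `^ (- a) by rewrite powR_gt0.
have lt1 : (c * e * t `^ (- a)) `^ p < (c * u) `^ p.
  apply: gt0_ltr_powR => //; rewrite ?nnegrE.
  - by rewrite !mulr_ge0 // ltW.
  - by rewrite mulr_ge0 // ltW.
  by rewrite -mulrA ltr_pM2l.
have eq1 : (c * e * t `^ (- a)) `^ p = (c * e) `^ p * t `^ (- ((n%:R + 2) / 2)).
  rewrite powRM ?mulr_ge0 ?ltW // -powRrM; congr (_ * t `^ _).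
  by rewrite /a; field; rewrite gt_eqF.
have eq2 : (2 * (t `^ (2^-1) / n%:R)) ^+ n = (2 / n%:R) ^+ n * t `^ (n%:R / 2).
  rewrite mulrCA mulrC exprMn; congr (_ * _).
  by rewrite -powR_mulrn ?powR_ge0 // -powRrM mulrC.
have eq3 : t `^ (- ((n%:R + 2) / 2)) * t `^ (n%:R / 2) * t = 1.
  rewrite -{3}(powRr1 (ltW t0)). rewrite -!powRD; last 2 first.
    by apply/implyP => _; rewrite gt_eqF.
    by apply/implyP => _; rewrite gt_eqF.
  rewrite (_ : _ + _ + 1 = 0) ?powRr0 //; by field.
have key : (c * e) `^ p * (2 / n%:R) ^+ n =
    (c * e * t `^ (- a)) `^ p * ((2 / n%:R) ^+ n * t `^ (n%:R / 2)) * t.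
  rewrite eq1; transitivity ((c * e) `^ p * (2 / n%:R) ^+ n *
     (t `^ (- ((n%:R + 2) / 2)) * t `^ (n%:R / 2) * t)); first by rewrite eq3 mulr1.
  ring.
move: H; rewrite key -eq2; apply/negP; rewrite -ltNge.
rewrite ltr_pM2r // ltr_pM2r //.
by rewrite exprn_gt0 // mulr_gt0 // divr_gt0 // powR_gt0.
Qed.
End Alg.
Section Box2.
Variable R : realType.
Local Open Scope ring_scope.
Lemma sqnorm_box n (x z : 'rV[R]_n) rho : (forall i, `|x ord0 i - z ord0 i| < rho) ->
  sqnorm (z - x) <= n%:R * rho ^+ 2.
Proof.
move=> H; rewrite /sqnorm.
apply: le_trans (_ : \sum_(i < n) rho ^+ 2 <= _).
  apply: ler_sum => i _; rewrite !mxE.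
  have := H i; rewrite ltr_norml => /andP[h1 h2]; nra.
by rewrite sumr_const card_ord mulr_natl.
Qed.
End Box2.

Arguments iint_ge0 {R n}.
Arguments iint_mono {R n}.
Arguments iint_box {R n}.
Arguments ball_rV {R n}.
Arguments unif_radius {R n}.
Arguments sqnorm_ge0 {R n}.
Arguments hk_compare {R n}.
Arguments HI {R n}.
Arguments HI_ge0 {R n}.
Arguments HI_fin {R n}.
Arguments HI_compare {R n}.
Arguments time_small {R}.
Arguments pow_alg {R}.
Arguments sqnorm_box {R n}.

Theorem lemma2p4 (R : realType) (n : nat) (Omega : set 'rV[R]_n) (p T : R)
  (mu : {finite_measure set (borelRn R n) -> \bar R})
  (u : 'rV[R]_n -> R -> R) :
  (0 < n)%N -> open Omega -> 1 <= p -> 0 < T ->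
  (forall x t, Omega x -> 0 < t < T ->
     u x t = fine (\int[mu]_(y in setT) (heat_kernel (x - y) t)%:E)) ->
  (\int[@lebesgue_measure R]_(t in `]0%R, T%R[)
      lebesgue_iint (fun x => (\1_Omega x * `|u x t| `^ p)%:E) < +oo)%E ->
  forall K : set 'rV[R]_n, compact K -> K `<=` Omega ->
    (fun t => sup [set u x t | x in K])
      =o_ ((0 : R)^'+) (fun t => t `^ (- ((n%:R + 2) / (2 * p)))).
Proof.
move=> n0 oO p1 T0 uE Fint K cK KO.
have p0 : 0 < p by apply: lt_le_trans p1.
set F := fun t => lebesgue_iint (fun x => (\1_Omega x * `|u x t| `^ p)%:E).
have F0 s : (0 <= F s)%E.
  by apply: iint_ge0 => v; rewrite lee_fin mulr_ge0 ?powR_ge0 // indicE ler0n.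
have [r r0 Hr] := unif_radius _ _ cK oO KO.
have nR0 : 0 < n%:R :> R by rewrite ltr0n.
have nR1 : 1 <= n%:R :> R by rewrite ler1n.
apply/eqoP => e e0.
set c := c0 R n.
have cpos : 0 < c := c0_gt0 R n.
set eta := (c * e) `^ p * (2 / n%:R) ^+ n.
have eta0 : 0 < eta by rewrite mulr_gt0 ?powR_gt0 ?mulr_gt0 // exprn_gt0 // divr_gt0.
have Hsmall := time_small _ _ T0 F0 Fint _ eta0.
have Hq : \forall t \near (0:R)^'+, t `^ 2^-1 < r.
  by apply: (cvgr_lt 0) => //; apply: powR_cvg0.
near=> t.
have t0 : 0 < t by near: t; exact: nbhs_right_gt.
have tT : t < T / 3 by near: t; apply: nbhs_right_lt; rewrite divr_gt0.
have t3T : 3 * t < T by move: tT; rewrite ltr_pdivlMr //; nra.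
have qr : t `^ 2^-1 < r by near: t; exact: Hq.
have W : (\int[@lebesgue_measure R]_(s in `[(2 * t)%R, (3 * t)%R[) F s <= eta%:E)%E.
  by near: t; exact: Hsmall.
set q := t `^ 2^-1 in qr *.
set rho := q / n%:R.
have q0 : 0 < q by rewrite powR_gt0.
have qt : q ^+ 2 = t.
  by rewrite -powR_mulrn ?powR_ge0 // -powRrM mulVf // powRr1 // ltW.
have rhoq : rho <= q by rewrite ler_pdivrMr // ler_peMr // ltW.
have rho0 : 0 < rho by rewrite divr_gt0.
have bound : forall x, K x -> u x t <= e * t `^ (- ((n%:R + 2) / (2 * p))).
  move=> x Kx.
  have Ox := KO x Kx.
  have uxE : u x t = fine (HI mu x t) by apply: uE => //; rewrite t0 /=; nra.
  have ux0 : 0 <= u x t by rewrite uxE fine_ge0 // HI_ge0.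
  apply: (pow_alg _ _ _ _ _ _ n0 t0 cpos e0 p1 ux0).
  have stepA : forall s, 2 * t <= s < 3 * t ->
      (((c * u x t) `^ p * (2 * rho) ^+ n)%:E <= F s)%E.
    move=> s /andP[s2 s3].
    have s0 : 0 < s by apply: lt_le_trans s2; rewrite mulr_gt0.
    rewrite -(iint_box x rho ((c * u x t) `^ p) (powR_ge0 _ _) rho0).
    apply: iint_mono => v.
      by rewrite lee_fin mulr_ge0 ?powR_ge0 // ler0n.
    case: asboolP => Hv; last by rewrite mulr0 lee_fin mulr_ge0 ?powR_ge0 // indicE ler0n.
    rewrite mulr1.
    have Hv' : forall i, `|x ord0 i - v ord0 i| < r.
      by move=> i; apply: lt_le_trans (Hv i) _; rewrite ltW // (le_lt_trans rhoq).
    have Ov : Omega v by apply: (Hr x Kx); apply/ball_rV; split.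
    have uvE : u v s = fine (HI mu v s) by apply: uE => //; rewrite s0 /=; nra.
    have sq : sqnorm (v - x) <= t.
      apply: le_trans (sqnorm_box _ _ _ Hv) _.
      rewrite /rho expr_div_n qt (_ : n%:R * (t / n%:R ^+ 2) = t / n%:R); last by field; rewrite gt_eqF.
      by rewrite ler_pdivrMr // ler_peMr // ltW.
    have cmp : c * u x t <= u v s.
      by rewrite uxE uvE; apply: HI_compare => //; rewrite s2 ltW.
    have uv0 : 0 <= u v s by apply: le_trans cmp; rewrite mulr_ge0 // ltW.
    rewrite indicE mem_set // mul1r ger0_norm // lee_fin.
    by apply: ge0_ler_powR => //; rewrite ?nnegrE ?mulr_ge0 // ?ltW.
  rewrite -lee_fin; apply: le_trans W.
  set C := (c * u x t) `^ p * (2 * rho) ^+ n.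
  have IC : (\int[@lebesgue_measure R]_(s in `[(2 * t)%R, (3 * t)%R[) (cst C%:E) s = (C * t)%:E)%E.
    rewrite integral_cst //= lebesgue_measure_itv /= lte_fin ifT; last by nra.
    by rewrite -EFinM; congr (_ * _)%:E; ring.
  rewrite -IC; apply: int_mono_ge0 => s.
    by move=> _; rewrite lee_fin mulr_ge0 ?powR_ge0 // exprn_ge0 // mulr_ge0 // ltW.
  by rewrite /= in_itv /= => /andP[s2 s3]; apply: stepA; rewrite s2.
rewrite (ger0_norm (powR_ge0 _ _)).
set S := [set u x t | x in K].
have eB : 0 <= e * t `^ (- ((n%:R + 2) / (2 * p))) by rewrite mulr_ge0 ?powR_ge0 // ltW.
case: (pselect (exists x, K x)) => [[x0 Kx0]|nK]; last first.
  have -> : S = set0.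
    by apply/seteqP; split => // y [x Kx _]; exfalso; apply: nK; exists x.
  by rewrite sup0 normr0.
have S0 : S !=set0 by exists (u x0 t); exists x0.
have ub : ubound S (e * t `^ (- ((n%:R + 2) / (2 * p)))).
  by move=> _ [x Kx <-]; exact: bound.
have sle := ge_sup S0 ub.
have ux00 : 0 <= u x0 t.
  rewrite (uE x0 t (KO x0 Kx0)); last by rewrite t0 /=; nra.
  exact: fine_ge0 (HI_ge0 mu x0 t).
have sge : u x0 t <= sup S by apply: ub_le_sup; [exists (e * t `^ (- ((n%:R + 2) / (2 * p)))) | exists x0].
by rewrite ger0_norm // (le_trans ux00).
Unshelve. all: by end_near.
Qed.
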